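(* (1) $s_3=U(S_2-S_{1,1})\in\mathcal{E}(\mathcal{P}^{s+}_{3,5})$. (2) If $f\in\mathcal{P}^{s+}_{3,5}$ satisfies $f(0,x,1)=0$ for all $x\ge0$, $f_a(0,0,1)=0$ and $f(1,1,1)=0$, then $f=\lambda s_3$ for some $\lambda\ge0$.
   Context: Let $a,b,c$ be variables. For nonnegative integers $m,n$ put $S_{m,n}=a^mb^n+b^mc^n+c^ma^n$, $S_n=S_{n,0}=a^n+b^n+c^n$, $T_{m,n}=S_{m,n}+S_{n,m}$, $U=abc$ (so $S_{1,1}=ab+bc+ca$). Let $\mathcal{H}^s_{3,5}$ be the real vector space of symmetric homogeneous polynomials of degree 5 in $\mathbb{R}[a,b,c]$; it has basis $s_0=S_5-US_{1,1}$, $s_1=T_{4,1}-2US_{1,1}$, $s_2=T_{3,2}-2US_{1,1}$, $s_3=US_2-US_{1,1}$, $s_4=US_{1,1}$. Let $\mathcal{P}^{s+}_{3,5}=\{f\in\mathcal{H}^s_{3,5}: f(a,b,c)\ge 0\text{ for all }a,b,c\ge0\}$. For a closed convex cone $\mathcal{P}$, an element $f\in\mathcal{P}\setminus\{0\}$ is extremal if whenever $f=g+h$ with $g,h\in\mathcal{P}$ we have $g,h\in\mathbb{R}_{\ge0}f$; $\mathcal{E}(\mathcal{P})$ is the set of extremal elements. $f_a=\partial f/\partial a$. *)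

(* Defs.v *)
From HB Require Import structures.
From mathcomp Require Import all_boot all_order all_algebra.
From mathcomp Require Import mpoly.
Set Implicit Arguments. Unset Strict Implicit. Unset Printing Implicit Defensive.
Import Order.TTheory GRing.Theory Num.Theory.
Local Open Scope ring_scope.

Section Defs.
Variable R : rcfType.

Definition va : {mpoly R[3]} := 'X_(0 : 'I_3).
Definition vb : {mpoly R[3]} := 'X_(1 : 'I_3).
Definition vc : {mpoly R[3]} := 'X_(2 : 'I_3).

Definition Smn (m n : nat) : {mpoly R[3]} :=
  va ^+ m * vb ^+ n + vb ^+ m * vc ^+ n + vc ^+ m * va ^+ n.
Definition Sn (n : nat) : {mpoly R[3]} := Smn n 0.
Definition Tmn (m n : nat) : {mpoly R[3]} := Smn m n + Smn n m.
Definition Uabc : {mpoly R[3]} := va * vb * vc.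

Definition s3 : {mpoly R[3]} := Uabc * Sn 2 - Uabc * Smn 1 1.

Definition pt (a b c : R) : 'I_3 -> R := fun i => nth 0 [:: a; b; c] i.

Definition Hs35 (f : {mpoly R[3]}) : Prop :=
  f \is symmetric /\ f \is 5.-homog.

Definition Ps35 (f : {mpoly R[3]}) : Prop :=
  Hs35 f /\ forall a b c : R, 0 <= a -> 0 <= b -> 0 <= c -> 0 <= f.@[pt a b c].

Definition extremal (P : {mpoly R[3]} -> Prop) (f : {mpoly R[3]}) : Prop :=
  P f /\ f != 0 /\
  forall g h : {mpoly R[3]}, P g -> P h -> f = g + h ->
    (exists l : R, 0 <= l /\ g = l *: f) /\ (exists l : R, 0 <= l /\ h = l *: f).

Definition deriv_a (f : {mpoly R[3]}) : {mpoly R[3]} := mderiv (0 : 'I_3) f.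

End Defs.

(* Main.v *)
Require Import Defs.
From HB Require Import structures.
From mathcomp Require Import all_boot all_order all_algebra.
From mathcomp Require Import fingroup perm mpoly ring lra zify.
Import Order.TTheory GRing.Theory Num.Theory.
Local Open Scope ring_scope.

Section S.
Variable R : rcfType.
Local Notation va := (va R).
Local Notation vb := (vb R).
Local Notation vc := (vc R).

Definition mk (i j k : nat) : 'X_{1..3} := [multinom [tuple i; j; k]].
Definition mono (i j k : nat) : {mpoly R[3]} := va ^+ i * vb ^+ j * vc ^+ k.

Lemma mk0 i j k : mk i j k (0:'I_3) = i. Proof. by []. Qed.
Lemma mk1 i j k : mk i j k (1:'I_3) = j. Proof. by []. Qed.
Lemma mk2 i j k : mk i j k (2:'I_3) = k. Proof. by []. Qed.
Lemma mk_eqE a b c i j k : (mk a b c == mk i j k) = [&& a == i, b == j & c == k].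
Proof.
apply/eqP/and3P => [E|[/eqP-> /eqP-> /eqP->]] //.
by rewrite -(mk0 a b c) -(mk1 a b c) -(mk2 a b c) E !eqxx.
Qed.

Lemma mk_eta (m : 'X_{1..3}) : m = mk (m (0:'I_3)) (m 1) (m 2).
Proof. apply/mnmP => -[[|[|[|l]]] Hl] //; rewrite [RHS]mnm_tnth /tnth /=; by congr (m _); apply: val_inj. Qed.

Lemma monoE i j k : mono i j k = 'X_[mk i j k].
Proof.
rewrite /mono /Defs.va /Defs.vb /Defs.vc !mpolyXn -!mpolyXD; congr 'X_[_].
apply/mnmP => l; rewrite !mnmDE !mulmnE !mnm1E.
case: l => [[|[|[|l]]] Hl] //; rewrite mnm_tnth /tnth /= ?muln1 ?muln0 ?mul1n ?mul0n ?addn0 ?add0n //.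
Qed.

Lemma mdeg_mk i j k : mdeg (mk i j k) = (i + j + k)%N.
Proof. by rewrite mdegE !big_ord_recr big_ord0 /= add0n. Qed.

Lemma mk_neq a b c i j k : (a + b + c = 5)%N -> (i + j + k != 5)%N ->
  (mk a b c == mk i j k) = false.
Proof.
move=> H1 H2; apply/eqP => E; move: H2; rewrite -(mdeg_mk i j k) -E mdeg_mk H1.
by [].
Qed.

Lemma msymXU (s : 'S_3) (i : 'I_3) : msym s ('X_i : {mpoly R[3]}) = 'X_(s i).
Proof.
rewrite msymX; apply: (congr1 (@mpolyX 3 R)); apply/mnmP => l; rewrite mnmE !mnm1E.
by rewrite -(inj_eq (@perm_inj _ s)) permKV.
Qed.


Lemma ord3P (P : 'I_3 -> Prop) : P 0 -> P 1 -> P 2 -> forall l, P l.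
Proof.
move=> H0 H1 H2 [[|[|[|l]]] Hl] //.
- by have -> : Ordinal Hl = 0 by apply: val_inj.
- by have -> : Ordinal Hl = 1 by apply: val_inj.
- by have -> : Ordinal Hl = 2%R by apply: val_inj.
Qed.

Section F.
Variable f : {mpoly R[3]}.
Hypothesis Hs : f \is symmetric.

Lemma c12 i j k : f@_(mk i j k) = f@_(mk j i k).
Proof.
rewrite -(msym_coeff (mk j i k) (tperm 0 1) Hs); congr (_@__).
apply/mnmP; apply: ord3P; rewrite mnmE ?tpermL ?tpermR ?tpermD //.
Qed.

Lemma c23 i j k : f@_(mk i j k) = f@_(mk i k j).
Proof.
rewrite -(msym_coeff (mk i k j) (tperm 1 2) Hs); congr (_@__).
apply/mnmP; apply: ord3P; rewrite mnmE ?tpermL ?tpermR ?tpermD //.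
Qed.

Definition M500 := mono 5 0 0 + mono 0 5 0 + mono 0 0 5.
Definition M410 := mono 4 1 0 + mono 4 0 1 + mono 1 4 0 + mono 0 4 1 + mono 1 0 4 + mono 0 1 4.
Definition M320 := mono 3 2 0 + mono 3 0 2 + mono 2 3 0 + mono 0 3 2 + mono 2 0 3 + mono 0 2 3.
Definition M311 := mono 3 1 1 + mono 1 3 1 + mono 1 1 3.
Definition M221 := mono 2 2 1 + mono 2 1 2 + mono 1 2 2.

Ltac synrefl := match goal with |- ?x = ?x => reflexivity end.
Ltac symtac :=
  first [ synrefl
        | rewrite [LHS]c12; synrefl
        | rewrite [LHS]c23; synrefl
        | rewrite [LHS]c12 [LHS]c23; synrefl
        | rewrite [LHS]c23 [LHS]c12; synrefl
        | rewrite [LHS]c12 [LHS]c23 [LHS]c12; synrefl ].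

Lemma decomp : f \is 5.-homog ->
  f = f@_(mk 5 0 0) *: M500 + f@_(mk 4 1 0) *: M410 + f@_(mk 3 2 0) *: M320
    + f@_(mk 3 1 1) *: M311 + f@_(mk 2 2 1) *: M221.
Proof.
move=> Hh; apply/mpolyP => m; rewrite (mk_eta m).
move: (m 0) (m 1) (m 2%R) => i j k.
rewrite /M500 /M410 /M320 /M311 /M221 !mcoeffD !mcoeffZ !mcoeffD !monoE !mcoeffX.
case: (eqVneq (i + j + k)%N 5) => H; last first.
  rewrite !mk_neq // (dhomog_nemf_coeff Hh) /=; first ring.
  by rewrite mdeg_mk.
case: i H => [|[|[|[|[|[|i]]]]]] H; case: j H => [|[|[|[|[|[|j]]]]]] H;
  case: k H => [|[|[|[|[|[|k]]]]]] H; try by move/eqP: H; rewrite ?addnS ?addSn.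
all: rewrite !mk_eqE /= ?mulr0n ?mulr1n ?addr0 ?add0r ?mulr0 ?mulr1 ?addr0 ?add0r.
all: symtac.
Qed.
End F.

Lemma meval_mono a b c i j k : (mono i j k).@[pt a b c] = a ^+ i * b ^+ j * c ^+ k.
Proof. by rewrite /mono !rmorphM !rmorphXn /= !mevalXU. Qed.

Lemma s3E : s3 R = M311 - M221.
Proof. rewrite /s3 /Uabc /Sn /Smn /M311 /M221 /mono; ring. Qed.

Lemma s3_eval a b c : (s3 R).@[pt a b c] =
  a * b * c * (a ^+ 2 + b ^+ 2 + c ^+ 2 - a * b - b * c - c * a).
Proof. rewrite s3E /M311 /M221 !(mevalB, mevalD) !meval_mono /=; ring. Qed.

Lemma part2 f : Ps35 f -> (forall x : R, 0 <= x -> f.@[pt 0 x 1] = 0) ->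
  f.@[pt 1 1 1] = 0 -> exists l : R, 0 <= l /\ f = l *: s3 R.
Proof.
case=> [[Hs Hh] Hpos] H0 H1.
have D := @decomp f Hs Hh.
set p := f@_(mk 5 0 0) in D *; set q := f@_(mk 4 1 0) in D *;
set r := f@_(mk 3 2 0) in D *; set u := f@_(mk 3 1 1) in D *;
set t := f@_(mk 2 2 1) in D *.
have ev : forall a b c, f.@[pt a b c] =
  p * (a ^+ 5 + b ^+ 5 + c ^+ 5)
  + q * (a ^+ 4 * b + a ^+ 4 * c + a * b ^+ 4 + b ^+ 4 * c + a * c ^+ 4 + b * c ^+ 4)
  + r * (a ^+ 3 * b ^+ 2 + a ^+ 3 * c ^+ 2 + a ^+ 2 * b ^+ 3 + b ^+ 3 * c ^+ 2
         + a ^+ 2 * c ^+ 3 + b ^+ 2 * c ^+ 3)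
  + u * (a ^+ 3 * b * c + a * b ^+ 3 * c + a * b * c ^+ 3)
  + t * (a ^+ 2 * b ^+ 2 * c + a ^+ 2 * b * c ^+ 2 + a * b ^+ 2 * c ^+ 2).
  move=> a b c; rewrite D /M500 /M410 /M320 /M311 /M221.
  rewrite !(mevalD, mevalZ) !meval_mono; ring.
have e0 : p = 0 by rewrite -(H0 0 (lexx _)) ev; ring.
have e1 : 2 * p + 2 * q + 2 * r = 0 by rewrite -(H0 1 ler01) ev; ring.
have e2 : 33 * p + 18 * q + 12 * r = 0 by rewrite -(H0 2 (ler0n _ 2)) ev; ring.
have e4 : 3 * p + 6 * q + 6 * r + 3 * u + 3 * t = 0 by rewrite -H1 ev; ring.
have e3 : 0 <= 34 * p + 38 * q + 26 * r + 12 * u + 10 * t.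
  have -> : 34 * p + 38 * q + 26 * r + 12 * u + 10 * t = f.@[pt 2 1 1]
    by rewrite ev; ring.
  exact: Hpos 2 1 1 (ler0n _ 2) ler01 ler01.
have hp : p = 0 by [].
have hq : q = 0 by lra.
have hr : r = 0 by lra.
have ht : t = - u by lra.
exists u; split; first by lra.
rewrite D hp hq hr ht s3E !scale0r !add0r scalerBr scaleNr.
by [].
Qed.
End S.

Section P1.
Variable R : rcfType.

Lemma s3_sym : s3 R \is symmetric.
Proof.
apply/issymP => s.
rewrite /s3 /Uabc /Sn /Smn /Defs.va /Defs.vb /Defs.vc.
rewrite !(rmorphB, rmorphD, rmorphM, rmorphXn) /= !msymXU.
have h01 : s 0 != s 1 by rewrite (inj_eq perm_inj).
have h02 : s 0 != s 2%R by rewrite (inj_eq perm_inj).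
have h12 : s 1 != s 2%R by rewrite (inj_eq perm_inj).
move: (s 0) (s 1) (s 2%R) h01 h02 h12.
apply: ord3P; apply: ord3P; apply: ord3P.
all: move=> h1 h2 h3; move: h1 h2 h3 => /=.
all: try by [].
all: move=> _ _ _; ring.
Qed.

Lemma s3_homog : s3 R \is 5.-homog.
Proof.
rewrite s3E /M311 /M221 !monoE.
have Xh i j k : (i + j + k = 5)%N -> ('X_[mk i j k] : {mpoly R[3]}) \is 5.-homog.
  by move=> h; rewrite dhomogX; apply/eqP; rewrite -h; apply: mdeg_mk.
apply: rpredB; apply: rpredD; try apply: rpredD; by apply: Xh.
Qed.

Lemma s3_ge0 a b c : 0 <= a -> 0 <= b -> 0 <= c -> 0 <= (s3 R).@[pt a b c].
Proof.
move=> ha hb hc; rewrite s3_eval.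
have -> : a ^+ 2 + b ^+ 2 + c ^+ 2 - a * b - b * c - c * a =
  ((a - b) ^+ 2 + (b - c) ^+ 2 + (c - a) ^+ 2) / 2.
  by field.
apply: mulr_ge0; first by rewrite !mulr_ge0.
by rewrite divr_ge0 // !addr_ge0 // sqr_ge0.
Qed.

Lemma s3_Ps : Ps35 (s3 R).
Proof. split; [split; [exact: s3_sym | exact: s3_homog] | exact: s3_ge0]. Qed.

Lemma s3_neq0 : s3 R != 0.
Proof.
apply/eqP => E; have := congr1 (meval (pt 2 1 1)) E.
rewrite s3_eval meval0 => h.
have : (2 : R) = 0 by rewrite -h; ring.
by move/eqP; rewrite pnatr_eq0.
Qed.

Lemma dom_part g h : Ps35 g -> Ps35 h -> s3 R = g + h ->
  exists l : R, 0 <= l /\ g = l *: s3 R.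
Proof.
move=> Pg Ph E; apply: part2 => //.
- move=> x hx.
  have := congr1 (meval (pt 0 x 1)) E; rewrite mevalD s3_eval.
  have := Pg.2 0 x 1 (lexx _) hx ler01; have := Ph.2 0 x 1 (lexx _) hx ler01.
  rewrite !mul0r => ? ? ?; lra.
- have := congr1 (meval (pt 1 1 1)) E; rewrite mevalD s3_eval.
  have := Pg.2 1 1 1 ler01 ler01 ler01; have := Ph.2 1 1 1 ler01 ler01 ler01.
  have -> : (1 * 1 * 1 * (1 ^+ 2 + 1 ^+ 2 + 1 ^+ 2 - 1 * 1 - 1 * 1 - 1 * 1) : R) = 0 by ring.
  move=> ? ? ?; lra.
Qed.
End P1.

Theorem theorem4p6 (R : rcfType) :
  extremal (@Ps35 R) (s3 R) /\
  (forall f : {mpoly R[3]}, Ps35 f ->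
     (forall x : R, 0 <= x -> f.@[pt 0 x 1] = 0) ->
     (deriv_a f).@[pt 0 0 1] = 0 ->
     f.@[pt 1 1 1] = 0 ->
     exists l : R, 0 <= l /\ f = l *: s3 R).
Proof.
split; last by move=> f Pf H0 _ H1; exact: part2.
split; first exact: s3_Ps.
split; first exact: s3_neq0.
move=> g h Pg Ph E; split; first exact: dom_part E.
by apply: dom_part Ph Pg _; rewrite addrC.
Qed.
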